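(* Let $\mathbb{F}$ be a field. The categories $\mathbf{Assoc}_1$ and $\mathbf{CAssoc}_1$ are action representable. More precisely, for every unitary associative algebra $X$ there is a natural isomorphism of functors $\mathbf{Assoc}^{\mathrm{op}}\to\mathbf{Set}$ $$\mathrm{SplExt}(-,U(X))\cong \mathrm{Hom}_{\mathbf{Assoc}}(-,U(X)),$$ and for every unitary commutative associative algebra $X$ there is a natural isomorphism of functors $\mathbf{CAssoc}^{\mathrm{op}}\to\mathbf{Set}$ $$\mathrm{SplExt}(-,U(X))\cong \mathrm{Hom}_{\mathbf{CAssoc}}(-,U(X));$$ that is, the actor of $X$ is (isomorphic to) $X$ itself.
   Context: All algebras are over a field $\mathbb{F}$. $\mathbf{Assoc}$ is the category of (not necessarily unitary) associative $\mathbb{F}$-algebras, $\mathbf{CAssoc}$ its full subcategory of commutative ones. For a variety $\mathcal{V}$ of non-associative algebras closed under adjoining an external unit, $\mathcal{V}_1$ denotes the category of algebras in $\mathcal{V}$ having a multiplicative unit, with unit-preserving algebra homomorphisms, and $U\colon\mathcal{V}_1\to\mathcal{V}$ is the forgetful functor. For objects $B,X$ of $\mathcal{V}$, a split extension of $B$ by $X$ is a diagram $X\xrightarrow{k}A\underset{\beta}{\overset{\alpha}{\rightleftarrows}}B$ in $\mathcal{V}$ with $\alpha\circ\beta=\mathrm{id}_B$ and $(X,k)$ a kernel of $\alpha$; $\mathrm{SplExt}(B,X)$ is the set of isomorphism classes of such split extensions, and $\mathrm{SplExt}(-,X)\colon\mathcal{V}^{\mathrm{op}}\to\mathbf{Set}$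 is the functor acting on morphisms $f\colon B'\to B$ by pullback along $f$. The category $\mathcal{V}_1$ is called action representable if for every object $X$ of $\mathcal{V}_1$ the functor $\mathrm{SplExt}(-,U(X))\colon\mathcal{V}^{\mathrm{op}}\to\mathbf{Set}$ is representable, i.e. naturally isomorphic to $\mathrm{Hom}_{\mathcal{V}}(-,T)$ for some object $T$ of $\mathcal{V}$ (called the actor of $X$). *)

(* Defs.v *)
From HB Require Import structures.
From mathcomp Require Import all_boot all_algebra.
Set Implicit Arguments. Unset Strict Implicit. Unset Printing Implicit Defensive.
Import GRing.Theory.
Local Open Scope ring_scope.

Record nuAlg (F : fieldType) : Type := NuAlg {
  carrier :> lmodType F;
  amul : carrier -> carrier -> carrier;
  amulA : associative amul;
  amulDl : left_distributive amul +%R;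
  amulDr : right_distributive amul +%R;
  amulZl : forall (a : F) (x y : carrier), amul (a *: x) y = a *: amul x y;
  amulZr : forall (a : F) (x y : carrier), amul x (a *: y) = a *: amul x y }.

Section Defs.
Variable F : fieldType.

Definition Assoc_obj : nuAlg F -> Prop := fun _ => True.
Definition is_comm (A : nuAlg F) : Prop := forall x y : A, amul x y = amul y x.
Definition CAssoc_obj : nuAlg F -> Prop := is_comm.

Definition has_unit (A : nuAlg F) : Prop :=
  exists e : A, forall x : A, amul e x = x /\ amul x e = x.

Definition is_hom (A B : nuAlg F) (f : A -> B) : Prop :=
  (forall x y : A, f (x + y) = f x + f y) /\
  (forall (a : F) (x : A), f (a *: x) = a *: f x) /\
  (forall x y : A, f (amul x y) = amul (f x) (f y)).

(* A split extension of B by X in the category with objects C: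
   X --k--> A <==alpha/beta==> B, alpha o beta = id, (X,k) a kernel of alpha
   (kernels in a variety of algebras: k injective with image ker alpha). *)
Record splitExt (C : nuAlg F -> Prop) (B X : nuAlg F) : Type := SplitExt {
  se_A : nuAlg F;
  se_AC : C se_A;
  se_alpha : se_A -> B;
  se_beta : B -> se_A;
  se_k : X -> se_A;
  se_alpha_hom : is_hom se_alpha;
  se_beta_hom : is_hom se_beta;
  se_k_hom : is_hom se_k;
  se_split : forall b : B, se_alpha (se_beta b) = b;
  se_k_inj : injective se_k;
  se_ker : forall a : se_A, se_alpha a = 0 <-> exists x : X, se_k x = a }.

Arguments se_A {C B X} s.
Arguments se_AC {C B X} s.
Arguments se_alpha {C B X} s _.
Arguments se_beta {C B X} s _.
Arguments se_k {C B X} s _.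

Definition se_iso (C : nuAlg F -> Prop) (B X : nuAlg F)
    (E1 E2 : splitExt C B X) : Prop :=
  exists (phi : se_A E1 -> se_A E2) (psi : se_A E2 -> se_A E1),
    [/\ is_hom phi, is_hom psi, cancel phi psi, cancel psi phi &
     [/\ forall x : X, phi (se_k E1 x) = se_k E2 x,
         forall a : se_A E1, se_alpha E2 (phi a) = se_alpha E1 a &
         forall b : B, phi (se_beta E1 b) = se_beta E2 b]].

(* E' is (a representative of) the pullback of E along f : B' -> B,
   i.e. SplExt(f)(E) = [E']. *)
Definition is_pullback (C : nuAlg F -> Prop) (B B' X : nuAlg F) (f : B' -> B)
    (E : splitExt C B X) (E' : splitExt C B' X) : Prop :=
  exists p : se_A E' -> se_A E,
    [/\ is_hom p,
        forall a' : se_A E', se_alpha E (p a') = f (se_alpha E' a'),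
        forall b' : B', p (se_beta E' b') = se_beta E (f b'),
        forall x : X, p (se_k E' x) = se_k E x &
        forall Y : nuAlg F, C Y ->
          forall (u : Y -> se_A E) (v : Y -> B'), is_hom u -> is_hom v ->
          (forall y : Y, se_alpha E (u y) = f (v y)) ->
          exists h : Y -> se_A E',
            [/\ is_hom h, (forall y : Y, p (h y) = u y),
                (forall y : Y, se_alpha E' (h y) = v y) &
                forall h' : Y -> se_A E', is_hom h' ->
                  (forall y : Y, p (h' y) = u y) ->
                  (forall y : Y, se_alpha E' (h' y) = v y) ->
                  forall y, h' y = h y]].

(* SplExt(-, X) is naturally isomorphic to Hom_C(-, T) on C^op:
   a family Phi_B : SplExt(B,X) -> Hom_C(B,T), well defined on isomorphism
   classes, bijective on isomorphism classes, and natural w.r.t. pullback. *)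
Definition splext_represented_by (C : nuAlg F -> Prop) (X T : nuAlg F) : Prop :=
  exists Phi : forall B : nuAlg F, splitExt C B X -> B -> T,
    [/\ (forall B (E : splitExt C B X), C B -> is_hom (Phi B E)),
        (forall B (E1 E2 : splitExt C B X), C B ->
            se_iso E1 E2 -> Phi B E1 =1 Phi B E2),
        (forall B (E1 E2 : splitExt C B X), C B ->
            Phi B E1 =1 Phi B E2 -> se_iso E1 E2),
        (forall B, C B -> forall g : B -> T, is_hom g ->
            exists E : splitExt C B X, Phi B E =1 g) &
        (forall B B' : nuAlg F, C B -> C B' -> forall f : B' -> B, is_hom f ->
            forall (E : splitExt C B X) (E' : splitExt C B' X),
              is_pullback f E E' -> Phi B' E' =1 (Phi B E \o f))].

Definition action_representable (C : nuAlg F -> Prop) : Prop :=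
  forall X : nuAlg F, C X -> has_unit X ->
    exists T : nuAlg F, C T /\ splext_represented_by C X T.

End Defs.

(* Main.v *)
Require Import Defs.
From mathcomp Require Import all_boot all_algebra.
From Stdlib Require Import ClassicalEpsilon.
Set Implicit Arguments. Unset Strict Implicit. Unset Printing Implicit Defensive.
Import GRing.Theory.
Local Open Scope ring_scope.

Section Basic.
Variable F : fieldType.

Lemma amul0l (A : nuAlg F) (x : A) : amul 0 x = 0.
Proof.
have := amulDl 0 0 x; rewrite addr0 => h.
by apply: (addrI (amul 0 x)); rewrite -h addr0.
Qed.

Lemma amul0r (A : nuAlg F) (x : A) : amul x 0 = 0.
Proof.
have := amulDr x 0 0; rewrite addr0 => h.
by apply: (addrI (amul x 0)); rewrite -h addr0.
Qed.

Lemma hom0 (A B : nuAlg F) (f : A -> B) : is_hom f -> f 0 = 0.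
Proof.
move=> [fD _]; have := fD 0 0; rewrite addr0 => h.
by apply: (addrI (f 0)); rewrite -h addr0.
Qed.

Lemma homB (A B : nuAlg F) (f : A -> B) : is_hom f -> forall x y, f (x - y) = f x - f y.
Proof.
move=> hf x y; have [fD _] := hf.
apply: (addIr (f y)); rewrite -fD subrK; by rewrite addrNK.
Qed.
End Basic.
Section SE.
Variables (F : fieldType) (X : nuAlg F) (e : X).
Hypothesis he : forall x : X, amul e x = x /\ amul x e = x.
Variable C : nuAlg F -> Prop.

Section OneE.
Variables (B : nuAlg F) (E : splitExt C B X).
Local Notation A := (se_A E).
Local Notation k := (se_k E).
Local Notation al := (se_alpha (s:=E)).
Local Notation be := (se_beta E).

Definition kpre (a : A) : X := epsilon (inhabits 0) (fun x => k x = a).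
Lemma kpreP a : al a = 0 -> k (kpre a) = a.
Proof. move=> h; apply: (epsilon_spec (inhabits 0) (fun x => k x = a)); exact/(se_ker (s:=E) _). Qed.

Lemma al_k x : al (k x) = 0.
Proof. by apply/(se_ker (s:=E) _); exists x. Qed.

Definition uE : A := k e.

Lemma al_u : al uE = 0. Proof. exact: al_k. Qed.

Lemma ucomm a : amul uE a = amul a uE.
Proof.
have [aD [aZ aM]] := se_alpha_hom E.
have [kD [kZ kM]] := se_k_hom E.
have [x hx] : exists x, k x = amul uE a by apply/(se_ker (s:=E) _); rewrite aM al_u amul0l.
have [y hy] : exists y, k y = amul a uE by apply/(se_ker (s:=E) _); rewrite aM al_u amul0r.
have h1 : amul uE a = amul (amul uE a) uE by rewrite -hx /uE -kM (proj2 (he x)).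
have h2 : amul a uE = amul uE (amul a uE) by rewrite -hy /uE -kM (proj1 (he y)).
by rewrite h1 -amulA -h2.
Qed.

Lemma uu : amul uE uE = uE.
Proof. have [kD [kZ kM]] := se_k_hom E. by rewrite /uE -kM (proj1 (he e)). Qed.

Definition PhiE (b : B) : X := kpre (amul uE (be b)).
Lemma PhiP b : k (PhiE b) = amul uE (be b).
Proof.
have [aD [aZ aM]] := se_alpha_hom E.
by apply: kpreP; rewrite aM al_u amul0l.
Qed.

Lemma Phi_hom : is_hom PhiE.
Proof.
have [kD [kZ kM]] := se_k_hom E.
have [bD [bZ bM]] := se_beta_hom E.
split; [|split] => *; apply: (se_k_inj (s:=E)).
- by rewrite kD !PhiP bD amulDr.
- by rewrite kZ !PhiP bZ amulZr.
- rewrite kM !PhiP bM -amulA (amulA (be _)) -ucomm !amulA uu.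
  done.
Qed.

Definition dec (a : A) : X := kpre (a - be (al a)).
Lemma decP a : k (dec a) + be (al a) = a.
Proof.
have aB := homB (se_alpha_hom E).
rewrite kpreP ?subrK // aB se_split; exact: subrr.
Qed.

Lemma alU y c : al (k y + be c) = c.
Proof. have [aD _] := se_alpha_hom E. by rewrite aD al_k se_split add0r. Qed.

Lemma decU y c : dec (k y + be c) = y.
Proof.
apply: (se_k_inj (s:=E)); apply: (addIr (be c)).
by rewrite -{2}(alU y c) decP.
Qed.

Lemma mul_form x b x' b' :
  amul (k x + be b) (k x' + be b') =
  k (amul x x' + amul x (PhiE b') + amul (PhiE b) x') + be (amul b b').
Proof.
have [kD [kZ kM]] := se_k_hom E.
have [bD [bZ bM]] := se_beta_hom E.
rewrite !kD !kM !PhiP amulDl !amulDr bM -!addrA; congr (_ + _).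
have e1 : amul (k x) (be b') = amul (k x) (amul uE (be b')).
  by rewrite amulA /uE -kM (proj2 (he x)).
have e2 : amul (be b) (k x') = amul (amul uE (be b)) (k x').
  by rewrite ucomm -amulA /uE -kM (proj1 (he x')).
by rewrite e1 e2 addrA addrC.
Qed.

End OneE.
End SE.
Arguments dec {F X C B} E a.
Arguments decP {F X C B} E a.
Section Transfer.
Variables (F : fieldType) (X : nuAlg F) (e : X).
Hypothesis he : forall x : X, amul e x = x /\ amul x e = x.
Variables (C : nuAlg F -> Prop) (B : nuAlg F).

Lemma decE (E : splitExt C B X) a : se_k E (dec E a) = a - se_beta E (se_alpha a).
Proof. by apply: (addIr (se_beta E (se_alpha a))); rewrite decP subrK. Qed.

Lemma decD (E : splitExt C B X) a a' : dec E (a + a') = dec E a + dec E a'.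
Proof.
have [aD _] := se_alpha_hom E. have [bD _] := se_beta_hom E. have [kD _] := se_k_hom E.
apply: (se_k_inj (s:=E)); rewrite kD !decE aD bD opprD addrACA //.
Qed.

Lemma decZ (E : splitExt C B X) (c : F) a : dec E (c *: a) = c *: dec E a.
Proof.
have [_ [aZ _]] := se_alpha_hom E. have [_ [bZ _]] := se_beta_hom E.
have [_ [kZ _]] := se_k_hom E.
apply: (se_k_inj (s:=E)); rewrite kZ !decE aZ bZ scalerBr //.
Qed.

Variables (E1 E2 : splitExt C B X).
Definition tr (a : se_A E1) : se_A E2 := se_k E2 (dec E1 a) + se_beta E2 (se_alpha a).

Lemma tr_form x b : tr (se_k E1 x + se_beta E1 b) = se_k E2 x + se_beta E2 b.
Proof. by rewrite /tr decU alU. Qed.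

Lemma tr_hom : PhiE e E1 =1 PhiE e E2 -> is_hom tr.
Proof.
move=> hP.
have [aD [aZ aM]] := se_alpha_hom E1.
have [kD [kZ kM]] := se_k_hom E2.
have [bD [bZ bM]] := se_beta_hom E2.
split; [|split].
- by move=> a a'; rewrite /tr decD aD kD bD addrACA.
- by move=> c a; rewrite /tr decZ aZ kZ bZ scalerDr.
move=> a a'.
rewrite -(decP E1 a) -(decP E1 a') (mul_form he) !tr_form (mul_form he).
by rewrite !hP.
Qed.

End Transfer.
Arguments tr {F X C B} E1 E2 a.

Lemma tr_cancel (F : fieldType) (X : nuAlg F) C B (E1 E2 : splitExt C B X) :
  cancel (tr E1 E2) (tr E2 E1).
Proof. by move=> a; rewrite /tr decU alU decP. Qed.

Lemma tr_iso (F : fieldType) (X : nuAlg F) (e : X)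
  (he : forall x : X, amul e x = x /\ amul x e = x) C B (E1 E2 : splitExt C B X) :
  PhiE e E1 =1 PhiE e E2 -> se_iso E1 E2.
Proof.
move=> hP; exists (tr E1 E2), (tr E2 E1); split.
- exact: tr_hom.
- by apply: tr_hom => // b; rewrite hP.
- exact: tr_cancel.
- exact: tr_cancel.
split.
- move=> x; have := tr_form E1 E2 x 0.
  by rewrite !(hom0 (se_beta_hom _)) !addr0.
- by move=> a; rewrite /tr alU.
- move=> b; have := tr_form E1 E2 0 b.
  by rewrite !(hom0 (se_k_hom _)) !add0r.
Qed.
Lemma perm7 (V : zmodType) (t1 t2 t3 t4 t5 t6 t7 : V) :
  t1 + t2 + t3 + t4 + (t5 + t6 + t7) = t1 + t3 + t5 + (t2 + t4 + t6) + t7.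
Proof.
rewrite !addrA; congr (_ + _); congr (_ + _).
by rewrite (addrAC t1 t2 t3) (addrAC _ t4 t5) (addrAC _ t2 t5).
Qed.

Lemma perm6 (V : zmodType) (a b c d e f : V) :
  a + b + (c + d) + (e + f) = a + c + e + (b + d + f).
Proof. by rewrite (addrACA a b c d) (addrACA (a + c) (b + d) e f). Qed.

Section SD.
Variables (F : fieldType) (X B : nuAlg F) (g : B -> X).
Hypothesis hg : is_hom g.

Definition sdT : lmodType F := ((X : lmodType F) * (B : lmodType F))%type.
Definition sdmul (p q : sdT) : sdT :=
  (amul p.1 q.1 + amul p.1 (g q.2) + amul (g p.2) q.1, amul p.2 q.2).

Lemma sdA : associative sdmul.
Proof.
have [gD [gZ gM]] := hg.
case=> x b [x' b'] [x'' b'']; rewrite /sdmul /=; congr pair; last exact: amulA.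
by rewrite !gM !amulDl !amulDr !amulA perm7.
Qed.

Lemma sdDl : left_distributive sdmul +%R.
Proof.
have [gD [gZ gM]] := hg.
case=> x b [x' b'] [x'' b'']; rewrite /sdmul /=; congr pair; last exact: amulDl.
by rewrite gD !amulDl perm6.
Qed.

Lemma sdDr : right_distributive sdmul +%R.
Proof.
have [gD [gZ gM]] := hg.
case=> x b [x' b'] [x'' b'']; rewrite /sdmul /=; congr pair; last exact: amulDr.
by rewrite gD !amulDr perm6.
Qed.

Lemma sdZl (a : F) (p q : sdT) : sdmul (a *: p) q = a *: sdmul p q.
Proof.
have [gD [gZ gM]] := hg.
case: p q => x b [x' b']; rewrite /sdmul /=; congr pair; last exact: amulZl.
by rewrite gZ !amulZl !scalerDr.
Qed.

Lemma sdZr (a : F) (p q : sdT) : sdmul p (a *: q) = a *: sdmul p q.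
Proof.
have [gD [gZ gM]] := hg.
case: p q => x b [x' b']; rewrite /sdmul /=; congr pair; last exact: amulZr.
by rewrite gZ !amulZr !scalerDr.
Qed.

Definition SDalg : nuAlg F := @NuAlg F sdT sdmul sdA sdDl sdDr sdZl sdZr.

Lemma SD_comm : is_comm X -> is_comm B -> is_comm SDalg.
Proof.
move=> cX cB [x b] [x' b']; rewrite /= /sdmul /=; congr pair; last exact: cB.
by rewrite (cX x x') (cX x (g b')) (cX (g b) x') addrAC.
Qed.

Variable C : nuAlg F -> Prop.
Hypothesis hC : C SDalg.

Definition SDext : splitExt C B X.
Proof.
refine (@SplitExt F C B X SDalg hC (fun p : sdT => p.2) (fun b => (0, b) : sdT)
          (fun x => (x, 0) : sdT) _ _ _ _ _ _).
- by split; [|split].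
- have g0 := hom0 hg.
  split; [|split] => *; rewrite /= ?/sdmul /=; congr pair.
  + by rewrite addr0.
  + by rewrite scaler0.
  + by rewrite !amul0l amul0r !addr0.
- have g0 := hom0 hg.
  split; [|split] => *; rewrite /= ?/sdmul /=; congr pair.
  + by rewrite addr0.
  + by rewrite scaler0.
  + by rewrite g0 amul0l !amul0r !addr0.
  + by rewrite amul0l.
- by [].
- by move=> x y [].
- case=> x b /=; split.
  + by move=> ->; exists x.
  + by case=> x' [_ <-].
Defined.

Lemma SDext_Phi (e : X) (he : forall x : X, amul e x = x /\ amul x e = x) :
  PhiE e SDext =1 g.
Proof.
move=> b; apply: (se_k_inj (s:=SDext)); rewrite PhiP /= /uE /= /sdmul /=.
congr pair; last exact: amul0l.
by rewrite (hom0 hg) !amul0r add0r addr0 (proj1 (he _)).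
Qed.
End SD.

Lemma Phi_nat (F : fieldType) (X : nuAlg F) (e : X)
  (he : forall x : X, amul e x = x /\ amul x e = x) C (B B' : nuAlg F)
  (f : B' -> B) (E : splitExt C B X) (E' : splitExt C B' X) :
  is_pullback f E E' -> PhiE e E' =1 (PhiE e E \o f).
Proof.
case=> p [hp _ pb pk _] b'; apply: (se_k_inj (s:=E)) => /=.
have [_ [_ pM]] := hp.
by rewrite -pk PhiP pM pk pb PhiP.
Qed.

Lemma gen_rep (F : fieldType) (C : nuAlg F -> Prop) (X : nuAlg F) :
  has_unit X ->
  (forall (B : nuAlg F) (g : B -> X) (hg : is_hom g), C B -> C (SDalg hg)) ->
  splext_represented_by C X X.
Proof.
move=> [e he] hSD.
exists (fun B E => PhiE e E); split.
- by move=> B E _; exact: Phi_hom.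
- move=> B E1 E2 _ [phi [psi [hphi _ _ _ [hk _ hb]]]] b.
  apply: (se_k_inj (s:=E2)).
  have [_ [_ pM]] := hphi.
  by rewrite -hk PhiP /uE pM hk hb -/(uE e E2) -PhiP.
- by move=> B E1 E2 _ h; apply: tr_iso.
- move=> B CB g hg; exists (SDext (hSD B g hg CB)); exact: SDext_Phi.
- by move=> B B' _ _ f _ E E' hpb; apply: Phi_nat.
Qed.

Theorem theorem3p1 (F : fieldType) :
  [/\ action_representable (@Assoc_obj F),
      action_representable (@CAssoc_obj F),
      (forall X : nuAlg F, has_unit X ->
         splext_represented_by (@Assoc_obj F) X X) &
      (forall X : nuAlg F, is_comm X -> has_unit X ->
         splext_represented_by (@CAssoc_obj F) X X)].
Proof.
have hA : forall X : nuAlg F, has_unit X -> splext_represented_by (@Assoc_obj F) X X.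
  by move=> X hu; apply: gen_rep.
have hCA : forall X : nuAlg F, is_comm X -> has_unit X ->
    splext_represented_by (@CAssoc_obj F) X X.
  by move=> X cX hu; apply: gen_rep => // B g hg CB; apply: SD_comm.
split => //.
- by move=> X _ hu; exists X; split => //; apply: hA.
- by move=> X cX hu; exists X; split => //; apply: hCA.
Qed.
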